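(* Let $0\le s\le w\le n$ and let $T$ be a family of distinct $w$-subsets of $[n]$ such that every two members of $T$ intersect in at least $s$ elements, and $T$ has the maximum possible cardinality among all such families. For $q\ge 2$ let $A_q$ be the set of all $|T|(q-1)^w$ words of $\mathbb{Z}_q^n$ whose support belongs to $T$. Then: (1) $A_2$ is a maximum anticode of diameter $2w-2s$ in $J_2(n,w)$; (2) for all sufficiently large $q$, $A_q$ is a maximum anticode of diameter $2w-s$ in $J_q(n,w)$; (3) if $C_q\subseteq J_q(n,w)$ is a code with minimum distance at least $2w-s+1$ and $|C_q|=|J_q(n,w)|/|A_q|$, then the binary code $C_2$ obtained from $C_q$ by replacing every nonzero symbol in every codeword by $1$ satisfies $|C_2|=|J_2(n,w)|/|A_2|$ and has minimum distance at least $2w-2s+2$ (so $C_2$ is a diameter perfect code in $J_2(n,w)$).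
   Context: $\mathbb{Z}_q=\{0,1,\dots,q-1\}$ is used merely as an alphabet; $[n]=\{1,\dots,n\}$. For $x\in\mathbb{Z}_q^n$, $\mathrm{supp}(x)=\{i: x_i\ne0\}$, $\mathrm{wt}(x)=|\mathrm{supp}(x)|$; $d(x,y)$ is the Hamming distance. $J_q(n,w)$ is the set of weight-$w$ words in $\mathbb{Z}_q^n$ with the Hamming metric. An anticode of diameter $D$ is a nonempty subset with all pairwise distances at most $D$; it is maximum if it has largest cardinality among such. A code of distance $d$ in $J_q(n,w)$ is a subset with at least two elements and pairwise distances at least $d$; it is diameter perfect if $|C|\cdot|A|=|J_q(n,w)|$ for some anticode $A$ of diameter less than $d$. *)

(* Defs.v *)
From mathcomp Require Import all_boot.
Set Implicit Arguments. Unset Strict Implicit. Unset Printing Implicit Defensive.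

Definition word (q n : nat) := {ffun 'I_n -> 'I_q}.

Definition supp (q n : nat) (x : word q n) : {set 'I_n} :=
  [set i | (x i : nat) != 0%N].

Definition wt (q n : nat) (x : word q n) : nat := #|supp x|.

Definition hdist (q n : nat) (x y : word q n) : nat := #|[set i | x i != y i]|.

Definition J (q n w : nat) : {set word q n} := [set x | wt x == w].

Definition is_anticode (q n w D : nat) (A : {set word q n}) : Prop :=
  A \subset J q n w /\ A != set0 /\
  (forall x y, x \in A -> y \in A -> hdist x y <= D).

Definition is_max_anticode (q n w D : nat) (A : {set word q n}) : Prop :=
  is_anticode w D A /\
  (forall B : {set word q n}, is_anticode w D B -> #|B| <= #|A|).

Definition is_code (q n w d : nat) (C : {set word q n}) : Prop :=
  C \subset J q n w /\ 2 <= #|C| /\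
  (forall x y, x \in C -> y \in C -> x != y -> d <= hdist x y).

Definition s_intersecting (n w s : nat) (T : {set {set 'I_n}}) : Prop :=
  (forall A, A \in T -> #|A| = w) /\
  (forall A B, A \in T -> B \in T -> s <= #|A :&: B|).

Definition max_s_intersecting (n w s : nat) (T : {set {set 'I_n}}) : Prop :=
  s_intersecting w s T /\
  (forall T' : {set {set 'I_n}}, s_intersecting w s T' -> #|T'| <= #|T|).

Definition Aq (q n : nat) (T : {set {set 'I_n}}) : {set word q n} :=
  [set x : word q n | supp x \in T].

Definition bit (b : bool) : 'I_2 := if b then ord_max else ord0.

Definition binarize (q n : nat) (x : word q n) : word 2 n :=
  [ffun i => bit ((x i : nat) != 0%N)].

Definition binarize_set (q n : nat) (C : {set word q n}) : {set word 2 n} :=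
  [set binarize x | x in C].

(* Main.v *)
Require Import Defs.
From mathcomp Require Import all_boot zify.

Lemma foldr_prod (T: finType) (f : T -> nat) : foldr muln 1 [seq f x | x : T] = \prod_(x:T) f x.
Proof. by rewrite /image_mem foldr_map -big_enum unlock /reducebig. Qed.

Lemma card_family_prod (aT : finType) (rT : finType) (F : aT -> pred rT) :
  #|family F| = \prod_(x : aT) #|F x|.
Proof. by rewrite card_family (@foldr_prod aT (fun x => #|F x|)). Qed.

Definition Fam (q n : nat) (S : {set 'I_n}) (j : 'I_n) : pred 'I_q :=
  if j \in S then [pred a : 'I_q | (a : nat) != 0%N] else [pred a : 'I_q | (a : nat) == 0%N].

Lemma card_z (q : nat) : 0 < q -> #|[pred a : 'I_q | (a : nat) == 0%N]| = 1.
Proof.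
move=> q0; rewrite -(card1 (Ordinal q0)); apply: eq_card => a.
rewrite !inE; apply/eqP/eqP => [->|h] //; exact: val_inj.
Qed.

Lemma card_nz (q : nat) : 0 < q -> #|[pred a : 'I_q | (a : nat) != 0%N]| = q - 1.
Proof.
move=> q0; have := cardC [pred a : 'I_q | (a : nat) == 0%N].
rewrite card_z // card_ord => e.
have -> : #|[pred a : 'I_q | (a : nat) != 0%N]| = #|[predC [pred a : 'I_q | (a : nat) == 0%N]]|.
  by apply eq_card => a; rewrite !inE.
by rewrite -[in RHS]e addKn.
Qed.

Lemma prod_Fam (q n : nat) (S : {set 'I_n}) : 0 < q ->
  \prod_(j : 'I_n) #|@Fam q n S j| = (q - 1) ^ #|S|.
Proof.
move=> q0; rewrite -prod_nat_const [RHS]big_mkcond /=.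
apply: eq_bigr => j _; rewrite /Fam; case: (j \in S).
  by rewrite card_nz.
by rewrite card_z.
Qed.

Lemma supp_fam (q n : nat) (S : {set 'I_n}) (x : word q n) :
  (supp x == S) = (x \in family (@Fam q n S)).
Proof.
apply/eqP/familyP => [<- j|h].
  by rewrite /Fam /supp inE; case: ifP => hh; rewrite inE // (negbFE hh).
apply/setP => j; rewrite /supp inE; have := h j; rewrite /Fam.
by case: (j \in S); rewrite inE // => /eqP ->.
Qed.

Lemma card_supp (q n : nat) (S : {set 'I_n}) : 0 < q ->
  #|[set x : word q n | supp x == S]| = (q - 1) ^ #|S|.
Proof.
move=> q0; rewrite -prod_Fam // -card_family_prod.
by apply: eq_card => x; rewrite inE supp_fam.
Qed.

Lemma card_supp_fix (q n : nat) (S : {set 'I_n}) (i : 'I_n) (c : 'I_q) :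
  0 < q -> i \in S -> (c : nat) != 0%N ->
  (q - 1) * #|[set x : word q n | (supp x == S) && (x i == c)]| = (q - 1) ^ #|S|.
Proof.
move=> q0 iS c0.
pose G (j : 'I_n) : pred 'I_q := if j == i then xpred1 c else @Fam q n S j.
have -> : #|[set x : word q n | (supp x == S) && (x i == c)]| = #|family G|.
  apply: eq_card => x; rewrite inE supp_fam.
  apply/andP/familyP => [[/familyP h /eqP e] j|h].
    by rewrite /G; case: eqP => [->|_]; [rewrite unfold_in /= e|exact: h].
  split; last by have := h i; rewrite /G eqxx unfold_in.
  apply/familyP => j; have := h j; rewrite /G; case: eqP => // -> /=.
  by rewrite unfold_in => /eqP ->; rewrite /Fam iS inE.
rewrite card_family_prod -prod_Fam // (bigD1 i) //= [in RHS](bigD1 i) //=.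
have c1 : #|xpred1 c| = 1 by rewrite -(card1 c); apply eq_card.
rewrite {1}/G eqxx c1 mul1n /Fam iS card_nz //; congr (_ * _).
by apply: eq_bigr => j /negbTE ji; rewrite /G ji.
Qed.
Lemma card_bigcup_leq (T I : finType) (P : pred I) (F : I -> {set T}) :
  #|\bigcup_(i | P i) F i| <= \sum_(i | P i) #|F i|.
Proof.
elim/big_rec2: _ => [|i y X _ h]; first by rewrite cards0.
by rewrite cardsU (leq_trans (leq_subr _ _)) // leq_add2l.
Qed.

Lemma card_by_supp (q n : nat) (B : {set word q n}) :
  #|B| = \sum_(S : {set 'I_n}) #|[set x in B | supp x == S]|.
Proof.
rewrite -sum1_card (partition_big (@supp q n) xpredT) //.
apply: eq_bigr => S _; rewrite -sum1_card; apply: eq_bigl => x.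
by rewrite !inE.
Qed.

Lemma card_suppin (q n w : nat) (F : {set {set 'I_n}}) : 0 < q ->
  (forall S, S \in F -> #|S| = w) ->
  #|[set x : word q n | supp x \in F]| = #|F| * (q - 1) ^ w.
Proof.
move=> q0 hF; rewrite card_by_supp (bigID (mem F)) /=.
rewrite [X in _ + X]big1 ?addn0; last first.
  move=> S /negbTE SF; apply/eqP; rewrite cards_eq0; apply/eqP/setP => x.
  by rewrite !inE; apply/negbTE; apply/andP => [[h /eqP e]]; move: h; rewrite e SF.
rewrite -sum_nat_const; apply: eq_bigr => S SF.
rewrite -(hF _ SF) -card_supp //; apply: eq_card => x; rewrite !inE.
by case e: (supp x == S); rewrite ?andbF // (eqP e) SF.
Qed.

Lemma diff_sub (q n : nat) (x y : word q n) :
  [set i | x i != y i] \subset supp x :|: supp y.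
Proof.
apply/subsetP => i; rewrite !inE; apply: contraR; rewrite negb_or !negbK.
by move=> /andP [/eqP a /eqP b]; apply/eqP/val_inj; rewrite /= a b.
Qed.

Lemma hdist_le (q n : nat) (x y : word q n) : hdist x y <= #|supp x :|: supp y|.
Proof. exact/subset_leq_card/diff_sub. Qed.

Lemma hdist_ge (q n : nat) (x y : word q n) :
  (forall i, i \in supp x :&: supp y -> x i != y i) ->
  #|supp x :|: supp y| <= hdist x y.
Proof.
move=> h; apply/subset_leq_card/subsetP => i; rewrite inE => hi; rewrite inE.
case/orP: hi => hi.
  case hy: (i \in supp y); first by apply: h; rewrite inE hi hy.
  move: hi hy; rewrite !inE => hx /negbFE hy; apply: contra hx => /eqP ->; exact hy.
case hx: (i \in supp x); first by apply: h; rewrite inE hi hx.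
move: hi hx; rewrite !inE => hy /negbFE hx; apply: contra hy => /eqP <-; exact hx.
Qed.

Lemma cardU_w (n w : nat) (S S' : {set 'I_n}) : #|S| = w -> #|S'| = w ->
  #|S :|: S'| = 2 * w - #|S :&: S'|.
Proof.
move=> hS hS'; rewrite cardsU hS hS'.
have : #|S :&: S'| <= #|S| by apply/subset_leq_card/subsetIl.
rewrite hS; lia.
Qed.

Lemma ord2_neq (a b : 'I_2) : (a != b) = ((a : nat) != 0%N) (+) ((b : nat) != 0%N).
Proof. by case: a => [[|[|a]] ha]; case: b => [[|[|b]] hb]. Qed.

Lemma hdist2 (n w : nat) (x y : word 2 n) : #|supp x| = w -> #|supp y| = w ->
  hdist x y = 2 * w - 2 * #|supp x :&: supp y|.
Proof.
move=> hx hy; rewrite /hdist.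
have -> : [set i | x i != y i] = (supp x :|: supp y) :\: (supp x :&: supp y).
  by apply/setP => i; rewrite !inE ord2_neq; case: (_ != 0%N); case: (_ != 0%N).
have sub : supp x :&: supp y \subset supp x :|: supp y.
  by apply/subsetP => i; rewrite !inE => /andP[->].
rewrite cardsD (setIidPr sub).
rewrite (@cardU_w _ _ _ _ hx hy).
have : #|supp x :&: supp y| <= #|supp x| by apply/subset_leq_card/subsetIl.
rewrite hx; move: #|_ :&: _| => k; lia.
Qed.

Lemma supp2_inj (n : nat) (x y : word 2 n) : supp x = supp y -> x = y.
Proof.
move=> /setP e; apply/ffunP => i; have := e i; rewrite !inE.
by case: (x i) => [[|[|a]] ha]; case: (y i) => [[|[|b]] hb] //= _; apply: val_inj.
Qed.

Lemma supp_binarize (q n : nat) (x : word q n) : supp (binarize x) = supp x.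
Proof. by apply/setP => i; rewrite !inE ffunE /bit; case: ((x i : nat) != 0%N). Qed.

Lemma J_card (q n w : nat) (x : word q n) : x \in J q n w -> #|supp x| = w.
Proof. by rewrite inE /wt => /eqP. Qed.

Lemma cross (q n w s : nat) (B : {set word q n}) (x : word q n) (S' : {set 'I_n}) :
  0 < q -> s <= w ->
  B \subset J q n w -> (forall x y, x \in B -> y \in B -> hdist x y <= 2 * w - s) ->
  x \in B -> #|supp x :&: S'| < s ->
  (q - 1) * #|[set y in B | supp y == S']| <= w * (q - 1) ^ w.
Proof.
move=> q0 sw BJ hB xB hI.
case: (eqVneq [set y in B | supp y == S'] set0) => [->|/set0Pn [y0 hy0]].
  by rewrite cards0 muln0.
have hS' : #|S'| = w.
  by move: hy0; rewrite !inE => /andP [/(subsetP BJ) /J_card h /eqP <-].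
have hx : #|supp x| = w by apply: J_card; exact: (subsetP BJ).
have sub : [set y in B | supp y == S'] \subset
   \bigcup_(i in supp x :&: S') [set y : word q n | (supp y == S') && (y i == x i)].
  apply/subsetP => y; rewrite !inE => /andP [yB /eqP ey].
  case: (pickP [pred i | (i \in supp x :&: S') && (y i == x i)]) => [i /andP[iI e]|none].
    by apply/bigcupP; exists i => //; rewrite inE ey eqxx e.
  exfalso.
  have h1 := hB _ _ xB yB.
  have h2 : #|supp x :|: supp y| <= hdist x y.
    apply: hdist_ge => i iI; have := none i; rewrite /= -ey iI /=.
    by move/negbT; rewrite eq_sym.
  have hy : #|supp y| = w by rewrite ey.
  have h3 := @cardU_w _ _ _ _ hx hy.
  move: h1 h2 h3 hI; rewrite ey; move: (hdist x y) (#|_ :|: _|) (#|_ :&: _|) => a b c.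
  lia.
have le := leq_trans (subset_leq_card sub) (card_bigcup_leq _ _ _ _).
apply: (leq_trans (leq_mul (leqnn _) le)); rewrite big_distrr /=.
rewrite (eq_bigr (fun _ => (q - 1) ^ w)); last first.
  move=> i; rewrite inE => /andP [ix iS']; rewrite card_supp_fix // ?hS' //.
  by move: ix; rewrite inE.
rewrite sum_nat_const leq_mul2r; apply/orP; right.
by rewrite -hx; apply/subset_leq_card/subsetIl.
Qed.

Lemma exists_wset (n w : nat) : w <= n -> exists S : {set 'I_n}, #|S| = w.
Proof.
move=> wn; exists [set widen_ord wn i | i in [set: 'I_w]].
rewrite card_imset ?cardsT ?card_ord // => a b /(congr1 val) /= e.
exact: val_inj.
Qed.

Lemma T_pos (n w s : nat) (T : {set {set 'I_n}}) :
  s <= w -> w <= n -> max_s_intersecting w s T -> 0 < #|T|.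
Proof.
move=> sw wn [_ Tmax]; have [S0 hS0] := exists_wset _ _ wn.
apply: (leq_trans _ (Tmax [set S0] _)); first by rewrite cards1.
split=> [A|A B]; rewrite !inE => /eqP -> //.
by move=> /eqP ->; rewrite setIid hS0.
Qed.

Lemma part2 (q n w s : nat) (T : {set {set 'I_n}}) :
  2 <= q -> s <= w -> w <= n -> max_s_intersecting w s T ->
  #|{set 'I_n}| * w <= q - 1 ->
  is_max_anticode w (2 * w - s) (Aq q T).
Proof.
move=> q2 sw wn hT hq; have Tpos := @T_pos _ _ _ _ sw wn hT.
case: hT => [[Tw Ts] Tmax].
have q0 : 0 < q by apply: leq_trans q2.
have m0 : 0 < q - 1 by rewrite subn_gt0.
have hA : #|Aq q T| = #|T| * (q - 1) ^ w by rewrite /Aq; apply: card_suppin.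
split.
  split; [|split].
  - by apply/subsetP => x; rewrite /Aq !inE /wt => /Tw ->.
  - by rewrite -card_gt0 hA muln_gt0 Tpos expn_gt0 m0.
  - move=> x y; rewrite /Aq !inE => hx hy.
    apply: (leq_trans (hdist_le _ _ x y)); rewrite (@cardU_w _ _ _ _ (Tw _ hx) (Tw _ hy)).
    have := Ts _ _ hx hy; move: (#|_ :&: _|) => k; lia.
move=> B [BJ [_ hB]].
set m := q - 1 in m0 hA hq *; set P := m ^ w in hA *.
pose BS S := [set y in B | supp y == S].
pose Fb := [set S : {set 'I_n} | w * P < m * #|BS S|].
have BSle : forall S, #|BS S| <= P.
  move=> S; case: (eqVneq (BS S) set0) => [->|/set0Pn [y hy]]; first by rewrite cards0.
  move: (hy); rewrite !inE => /andP [/(subsetP BJ) /J_card hyw /eqP ey].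
  rewrite /P -hyw ey -card_supp //; apply/subset_leq_card/subsetP => z.
  by rewrite !inE => /andP [].
have FbS : forall S, S \in Fb -> exists x, x \in B /\ supp x = S.
  move=> S; rewrite inE; case: (eqVneq (BS S) set0) => [->|/set0Pn [y hy]].
    by rewrite cards0 muln0.
  by move: hy; rewrite !inE => /andP [yB /eqP ey] _; exists y.
have cr : forall x S', S' \in Fb -> x \in B -> s <= #|supp x :&: S'|.
  move=> x S' hS' xB; rewrite leqNgt; apply/negP => hlt.
  have := @cross _ _ _ _ _ _ _ q0 sw BJ hB xB hlt; move: hS'; rewrite inE.
  rewrite -/m -/P -/(BS S'); move: (m * _) => a; lia.
have Fbint : s_intersecting w s Fb.
  split=> [S /FbS [x [xB <-]]|S S' /FbS [x [xB <-]] hS']; last exact: cr.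
  exact/J_card/(subsetP BJ).
have Fble := Tmax _ Fbint.
have spl : m * #|B| = \sum_(S in Fb) m * #|BS S| + \sum_(S | S \notin Fb) m * #|BS S|.
  by rewrite (card_by_supp _ _ B) big_distrr (bigID (mem Fb)) /=.
have s1 : \sum_(S in Fb) m * #|BS S| <= #|Fb| * (m * P).
  rewrite -sum_nat_const; apply: leq_sum => S _; rewrite leq_mul2l BSle orbT //.
rewrite hA -(leq_pmul2l m0).
case: (boolP [exists S, (S \notin Fb) && (BS S != set0)]).
  case/existsP => S0 /andP [S0F /set0Pn [x0 hx0]].
  move: hx0; rewrite !inE => /andP [x0B /eqP ex0].
  have : s_intersecting w s (S0 |: Fb).
    split.
      move=> S /setU1P [->|]; first by rewrite -ex0; exact/J_card/(subsetP BJ).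
      by case: Fbint => h _; exact: h.
    move=> S S' /setU1P [->|hS] /setU1P [->|hS'].
    - by rewrite setIid -ex0 (J_card _ _ _ _ (subsetP BJ _ x0B)).
    - by rewrite -ex0; apply: cr.
    - by rewrite setIC -ex0; apply: cr.
    - by case: Fbint => _ h; exact: h.
  move/Tmax; rewrite cardsU1 S0F /= => hf.
  have s2 : \sum_(S | S \notin Fb) m * #|BS S| <= #|{set 'I_n}| * (w * P).
    apply: (@leq_trans (\sum_(S | S \notin Fb) w * P)).
      by apply: leq_sum => S SF; move: SF; rewrite inE -leqNgt.
    by rewrite sum_nat_const leq_mul2r max_card orbT.
  rewrite spl; apply: (leq_trans (leq_add s1 s2)).
  have e3 : #|{set 'I_n}| * (w * P) <= m * P by rewrite mulnA leq_mul2r hq orbT.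
  apply: (leq_trans (leq_add (leqnn _) e3)).
  rewrite [in X in _ <= X]mulnCA; move: hf; move: #|Fb| #|T| (m * P) => a b c h.
  by rewrite -[X in _ + X]mul1n -mulnDl leq_mul2r addnC h orbT.
rewrite negb_exists => /forallP hall.
rewrite spl [X in _ + X]big1 ?addn0; last first.
  move=> S SF; have := hall S; rewrite SF /= negbK => /eqP ->; by rewrite cards0 muln0.
apply: (leq_trans s1); rewrite [in X in _ <= X]mulnCA leq_mul2r Fble orbT //.
Qed.

Lemma part1 (n w s : nat) (T : {set {set 'I_n}}) :
  s <= w -> w <= n -> max_s_intersecting w s T ->
  is_max_anticode w (2 * w - 2 * s) (Aq 2 T).
Proof.
move=> sw wn hT; have Tpos := @T_pos _ _ _ _ sw wn hT.
case: hT => [[Tw Ts] Tmax].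
have hA : #|Aq 2 T| = #|T|.
  by rewrite /Aq (card_suppin 2 n w) // exp1n muln1.
split.
  split; [|split].
  - by apply/subsetP => x; rewrite /Aq !inE /wt => /Tw ->.
  - by rewrite -card_gt0 hA.
  - move=> x y; rewrite /Aq !inE => hx hy.
    rewrite (hdist2 _ _ _ _ (Tw _ hx) (Tw _ hy)).
    have := Ts _ _ hx hy; move: (#|_ :&: _|) => k; lia.
move=> B [BJ [_ hB]].
have inj : {in B &, injective (@supp 2 n)}.
  by move=> x y _ _; apply: supp2_inj.
rewrite hA -(card_in_imset inj); apply: Tmax; split.
  by move=> S /imsetP [x xB ->]; apply: J_card; exact: (subsetP BJ).
move=> S S' /imsetP [x xB ->] /imsetP [y yB ->].
have hx := J_card _ _ _ _ (subsetP BJ _ xB); have hy := J_card _ _ _ _ (subsetP BJ _ yB).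
have := hB _ _ xB yB; rewrite (hdist2 _ _ _ _ hx hy).
have : #|supp x :&: supp y| <= #|supp x| by apply/subset_leq_card/subsetIl.
rewrite hx; move: (#|_ :&: _|) => k; lia.
Qed.

Lemma part3 (q n w s : nat) (T : {set {set 'I_n}}) :
  s <= w -> w <= n -> max_s_intersecting w s T ->
  2 <= q -> forall C : {set word q n},
          is_code w (2 * w - s + 1) C ->
          #|C| * #|Aq q T| = #|J q n w| ->
          #|binarize_set C| * #|Aq 2 T| = #|J 2 n w| /\
          (forall x y, x \in binarize_set C -> y \in binarize_set C -> x != y ->
             2 * w - 2 * s + 2 <= hdist x y).
Proof.
move=> sw wn [[Tw Ts] Tmax] q2 C [CJ [_ hC]] hcard.
have q0 : 0 < q by apply: leq_trans q2.
have m0 : 0 < q - 1 by rewrite subn_gt0.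
pose W := [set S : {set 'I_n} | #|S| == w].
have hW : forall S, S \in W -> #|S| = w by move=> S; rewrite inE => /eqP.
have eJ : forall r, J r n w = [set x : word r n | supp x \in W].
  by move=> r; apply/setP => x; rewrite !inE.
have small : forall x y, x \in C -> y \in C -> x != y -> #|supp x :&: supp y| < s.
  move=> x y xC yC xy; have := hC _ _ xC yC xy.
  have := hdist_le _ _ x y.
  rewrite (cardU_w _ _ _ _ (J_card _ _ _ _ (subsetP CJ _ xC)) (J_card _ _ _ _ (subsetP CJ _ yC))).
  have : #|supp x :&: supp y| <= #|supp x| by apply/subset_leq_card/subsetIl.
  rewrite (J_card _ _ _ _ (subsetP CJ _ xC)); move: (#|_ :&: _|) (hdist x y) => k d; lia.
have inj : {in C &, injective (@binarize q n)}.
  move=> x y xC yC e; apply/eqP; apply/negP => /negP xy.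
  have := small _ _ xC yC xy; move: (congr1 (@supp 2 n) e).
  rewrite !supp_binarize => ->; rewrite setIid (J_card _ _ _ _ (subsetP CJ _ yC)).
  by rewrite ltnNge sw.
split.
  rewrite /binarize_set (card_in_imset inj) eJ /Aq (card_suppin 2 n w) // ?(card_suppin 2 n w) //.
  move: hcard; rewrite eJ /Aq (card_suppin q n w) // (card_suppin q n w) //.
  rewrite exp1n !muln1 mulnA => /eqP; rewrite eqn_pmul2r ?expn_gt0 ?m0 // => /eqP //.
move=> bx b_y /imsetP [x xC ->] /imsetP [y yC ->] bxy.
have xy : x != y by apply: contraNneq bxy => ->.
have hx := J_card _ _ _ _ (subsetP CJ _ xC); have hy := J_card _ _ _ _ (subsetP CJ _ yC).
rewrite -(supp_binarize _ _ x) in hx; rewrite -(supp_binarize _ _ y) in hy.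
rewrite (hdist2 _ _ _ _ hx hy) !supp_binarize.
have := small _ _ xC yC xy; move: (#|_ :&: _|) => k; lia.
Qed.

Theorem mainTheorem5 (n w s : nat) (T : {set {set 'I_n}}) :
  s <= w -> w <= n ->
  max_s_intersecting w s T ->
  [/\ is_max_anticode w (2 * w - 2 * s) (Aq 2 T),
      (exists q0, forall q, q0 <= q -> 2 <= q ->
          is_max_anticode w (2 * w - s) (Aq q T))
    & (forall q, 2 <= q -> forall C : {set word q n},
          is_code w (2 * w - s + 1) C ->
          #|C| * #|Aq q T| = #|J q n w| ->
          #|binarize_set C| * #|Aq 2 T| = #|J 2 n w| /\
          (forall x y, x \in binarize_set C -> y \in binarize_set C -> x != y ->
             2 * w - 2 * s + 2 <= hdist x y))].
Proof.
move=> sw wn hT; split.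
- exact: part1.
- exists (#|{set 'I_n}| * w + 1) => q hq q2; apply: part2 => //.
  move: hq; move: (_ * w) => a; lia.
- by move=> q q2; apply: part3.
Qed.
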